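(* Let $s\geq 2$ and let $G$ be either $G_{(s,0)}$ or $G_{(s,s)}$, acting faithfully and transitively on a set of $n$ points. Let $T=\langle u,v\rangle$ if $G=G_{(s,0)}$ and $T=\langle g,h\rangle$ if $G=G_{(s,s)}$. If $T$ is transitive, then $G=G_{(s,0)}$ and $n=s^2$.
   Context: $G_{(s,0)}$ is the Coxeter group $[3,3,3]=\langle\rho_0,\rho_1,\rho_2\mid \rho_i^2=1,\ (\rho_i\rho_j)^3=1\ (i\neq j)\rangle$ factored by $(\rho_0\rho_1\rho_2\rho_1)^s$ (group of the toroidal hypermap $(3,3,3)_{(s,0)}$); $G_{(s,s)}$ is $[3,3,3]$ factored by $(\rho_0\rho_1\rho_2)^{2s}$ (group of $(3,3,3)_{(s,s)}$). Translations: $u=\rho_0\rho_1\rho_2\rho_1$, $v=\rho_1 u\rho_1=\rho_1\rho_0\rho_1\rho_2$; $g=(\rho_0\rho_1\rho_2)^2$, $h=\rho_0 g\rho_0$. In each case $T$ is a normal abelian subgroup (the translation subgroup) of order $s^2$. *)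

(* Defs.v *)
From mathcomp Require Import all_boot all_fingroup.
Set Implicit Arguments.
Unset Strict Implicit.
Unset Printing Implicit Defensive.
Local Open Scope group_scope.

Definition gen3 (gT : finGroupType) (a b c : gT) : {group gT} :=
  <<[set a; b; c]>>%G.

Definition coxeter333_rel (gT : finGroupType) (a b c : gT) : Prop :=
  [/\ a ^+ 2 = 1, b ^+ 2 = 1 & c ^+ 2 = 1] /\
  [/\ (a * b) ^+ 3 = 1, (a * c) ^+ 3 = 1 & (b * c) ^+ 3 = 1].

Definition tr_u (gT : finGroupType) (a b c : gT) : gT := a * b * c * b.
Definition tr_v (gT : finGroupType) (a b c : gT) : gT := b * a * b * c.
Definition tr_g (gT : finGroupType) (a b c : gT) : gT := (a * b * c) ^+ 2.
Definition tr_h (gT : finGroupType) (a b c : gT) : gT := a * tr_g a b c * a.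

(* (a,b,c) are the images of (rho0,rho1,rho2) under an isomorphism from
   G_(s,0) onto the group they generate: the relations hold for (a,b,c)
   and the generated group is isomorphic to the presented group. *)
Definition is_G_s0 (s : nat) (gT : finGroupType) (a b c : gT) : Prop :=
  [/\ coxeter333_rel a b c, (tr_u a b c) ^+ s = 1 &
      gen3 a b c \isog Grp (x : y : z :
        (x ^+ 2, y ^+ 2, z ^+ 2, (x * y) ^+ 3, (x * z) ^+ 3, (y * z) ^+ 3,
         (x * y * z * y) ^+ s))].

Definition is_G_ss (s : nat) (gT : finGroupType) (a b c : gT) : Prop :=
  [/\ coxeter333_rel a b c, (a * b * c) ^+ (2 * s)%N = 1 &
      gen3 a b c \isog Grp (x : y : z :
        (x ^+ 2, y ^+ 2, z ^+ 2, (x * y) ^+ 3, (x * z) ^+ 3, (y * z) ^+ 3,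
         (x * y * z) ^+ (2 * s)%N))].

(* Main.v *)
Require Import Defs.
From mathcomp Require Import all_boot all_fingroup all_algebra.
From mathcomp Require Import cyclic ring.
Set Implicit Arguments. Unset Strict Implicit. Unset Printing Implicit Defensive.
Import GRing.Theory.
Local Open Scope group_scope.
Section Words.
Variables (gT : finGroupType).

Lemma invol (x : gT) : x ^+ 2 = 1 -> x^-1 = x.
Proof. by move=> h; apply/eqP; rewrite eq_invg_mul -expg2 h. Qed.

Lemma inv_t (x t : gT) : x ^+ 2 = 1 -> x * (x * t) = t.
Proof. by move=> h; rewrite mulgA -expg2 h mul1g. Qed.

Lemma braid_t (x y t : gT) : x ^+ 2 = 1 -> y ^+ 2 = 1 -> (x * y) ^+ 3 = 1 ->
  x * (y * (x * t)) = y * (x * (y * t)).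
Proof.
move=> hx hy h3.
have e : (x * y * x) * (y * x * y) = 1 by rewrite -h3 !expgS expg0 mulg1 !mulgA.
have: (x * y * x)^-1 = y * x * y by apply/eqP; rewrite eq_invg_mul e.
rewrite !invMg !invol // mulgA => E.
by rewrite !mulgA E.
Qed.
End Words.

Section Ids.
Variables (gT : finGroupType) (a b c : gT).
Hypotheses (a2 : a ^+ 2 = 1) (b2 : b ^+ 2 = 1) (c2 : c ^+ 2 = 1)
  (ab3 : (a * b) ^+ 3 = 1) (ac3 : (a * c) ^+ 3 = 1) (bc3 : (b * c) ^+ 3 = 1).

Let Ia t := @inv_t _ a t a2. Let Ib t := @inv_t _ b t b2.
Let Ic t := @inv_t _ c t c2.
Let Bab t := @braid_t _ a b t a2 b2 ab3. Let Bac t := @braid_t _ a c t a2 c2 ac3.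
Let Bbc t := @braid_t _ b c t b2 c2 bc3.

Lemma uv_comm : (a*b*c*b) * (b*a*b*c) = (b*a*b*c) * (a*b*c*b).
Proof.
rewrite -[LHS]mulg1 -[RHS]mulg1 -!mulgA.
rewrite [in X in X = _]Ib.
rewrite -[in X in _ = X]Bab [in X in _ = X]Bbc [in X in _ = X]Bac [in X in _ = X]Ic //.
Qed.
Lemma uv_g : (a*b*c*b) * (b*a*b*c) = (a*b*c)^+2.
Proof.
rewrite expg2 -[LHS]mulg1 -[RHS]mulg1 -!mulgA.
by rewrite [in X in X = _]Ib.
Qed.

Lemma huu : (a * (a*b*c)^+2 * a) * (a*b*c*b) * (a*b*c*b) = b*a*b*c.
Proof.
rewrite expg2 -[LHS]mulg1 -[RHS]mulg1 -!mulgA.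
rewrite [in X in X = _]Ia [in X in X = _]Ia [in X in X = _]Bbc.
rewrite [in X in X = _]Ic [in X in X = _]Ib -[in X in X = _]Bac.
by rewrite [in X in X = _]Ia -[in X in X = _]Bbc [in X in X = _]Ib.
Qed.
End Ids.
Lemma gen3E (gT : finGroupType) (a b c : gT) :
  gen3 a b c = (<[a]> <*> <[b]> <*> <[c]>)%G.
Proof.
apply/val_inj => /=; apply/eqP; rewrite eqEsubset; apply/andP; split.
  rewrite gen_subG; apply/subsetP => x; rewrite !inE => /orP[/orP[]|]/eqP->; rewrite -cycle_subG.
  - exact: subset_trans (joing_subl _ _) (joing_subl _ _).
  - exact: subset_trans (joing_subr _ _) (joing_subl _ _).
  - exact: joing_subr.
by rewrite !join_subG !cycle_subG !mem_gen // !inE eqxx ?orbT.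
Qed.

Lemma homs0 (s : nat) (gT : finGroupType) (a b c : gT) :
  coxeter333_rel a b c -> (tr_u a b c) ^+ s = 1 ->
  gen3 a b c \homg Grp (x : y : z :
        (x ^+ 2, y ^+ 2, z ^+ 2, (x * y) ^+ 3, (x * z) ^+ 3, (y * z) ^+ 3,
         (x * y * z * y) ^+ s)).
Proof.
move=> [[a2 b2 c2] [ab ac bc]] us.
apply/existsP; exists (a, b, c) => /=.
have E : <[a]> <*> <[b]> <*> <[c]> = <<[set a; b; c]>> := esym (congr1 val (gen3E a b c)).
rewrite !xpair_eqE /= E eqxx a2 b2 c2 ab ac bc -/(tr_u a b c) us !eqxx.
done.
Qed.

Section Transfer.
Variables (gT mT : finGroupType) (a b c : gT) (x y z : mT).
Let H := gen3 (a, x) (b, y) (c, z).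
Hypothesis homH : H \homg gen3 a b c.

Lemma fst_imH : (@fst gT mT) @: H = gen3 a b c.
Proof.
rewrite -morphimEsub ?subsetT // morphim_gen ?subsetT // morphimEsub ?subsetT //.
by rewrite !imsetU !imset_set1.
Qed.

Lemma fst_injH : {in H &, injective (@fst gT mT)}.
Proof.
apply/imset_injP; rewrite eqn_leq leq_imset_card /= fst_imH.
by apply: dvdn_leq => //; exact: card_homg.
Qed.



Lemma fst_gen2 (w1 w2 : gT * mT) :
  (@fst gT mT) @: <<[set w1; w2]>> = <<[set w1.1; w2.1]>>.
Proof.
rewrite -morphimEsub ?subsetT // morphim_gen ?subsetT // morphimEsub ?subsetT //.
by rewrite imsetU !imset_set1.
Qed.

Lemma snd_gen2 (w1 w2 : gT * mT) :
  (@snd gT mT) @: <<[set w1; w2]>> = <<[set w1.2; w2.2]>>.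
Proof.
rewrite -morphimEsub ?subsetT // morphim_gen ?subsetT // morphimEsub ?subsetT //.
by rewrite imsetU !imset_set1.
Qed.

Lemma transfer_card (w1 w2 : gT * mT) : w1 \in H -> w2 \in H ->
  #|<<[set w1.2; w2.2]>>| <= #|<<[set w1.1; w2.1]>>|.
Proof.
move=> h1 h2.
have sK : <<[set w1; w2]>> \subset H by rewrite gen_subG !subUset !sub1set h1 h2.
have inj : {in <<[set w1; w2]>> &, injective (@fst gT mT)}.
  move=> u v /(subsetP sK) Hu /(subsetP sK) Hv; exact: fst_injH.
by rewrite -fst_gen2 -snd_gen2 (card_in_imset inj) leq_imset_card.
Qed.

Lemma transfer_mem (w0 w1 w2 : gT * mT) : w0 \in H -> w1 \in H -> w2 \in H ->
  w0.1 \in <<[set w1.1; w2.1]>> -> w0.2 \in <<[set w1.2; w2.2]>>.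
Proof.
move=> h0 h1 h2.
have sK : <<[set w1; w2]>> \subset H by rewrite gen_subG !subUset !sub1set h1 h2.
rewrite -fst_gen2 -snd_gen2 => /imsetP[k Kk ek].
have -> : w0 = k by apply: fst_injH => //; apply: (subsetP sK).
exact: imset_f.
Qed.
End Transfer.

Section Reg.
Variables (n : nat) (T : {group {perm 'I_n}}).
Hypothesis trT : [transitive T, on [set: 'I_n] | 'P].

Lemma cent_eq (p q : {perm 'I_n}) (x : 'I_n) :
  p \in 'C(T) -> q \in 'C(T) -> p x = q x -> p = q.
Proof.
move=> /centP cp /centP cq e; apply/permP => y.
have [t Tt ->] := atransP2 trT (in_setT x) (in_setT y).
rewrite /= -!permM -(cp t Tt) -(cq t Tt) !permM e //.
Qed.

Lemma abel_in (p : {perm 'I_n}) : abelian T -> p \in 'C(T) -> p \in T.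
Proof.
move=> abT cp; have := trT; rewrite /atrans => /imsetP[x _ _].
have [t Tt e] := atransP2 trT (in_setT x) (in_setT (p x)).
have -> : p = t by apply: (cent_eq cp (subsetP abT t Tt) e).
exact: Tt.
Qed.

Lemma card_reg : abelian T -> n = #|T|.
Proof.
move=> abT; have := trT; rewrite /atrans => /imsetP[x _ _].
have := card_orbit 'P T x; rewrite (atransP trT x (in_setT x)) cardsT card_ord.
move=> E; rewrite {1}E.
suff -> : 'C_T[x | 'P] = 1 by rewrite indexg1.
apply/trivgP/subsetP => t /setIP[Tt /astab1P ft]; rewrite inE.
apply/eqP; apply: (cent_eq (x := x) (subsetP abT t Tt)); first exact: group1.
by rewrite perm1.
Qed.
End Reg.

Section Abel2.
Variables (gT : finGroupType) (u v : gT).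
Hypothesis cuv : u * v = v * u.

Lemma abel2 : abelian <<[set u; v]>>.
Proof.
rewrite abelian_gen; apply/centsP => p; rewrite !inE => /orP[]/eqP-> q;
  rewrite !inE => /orP[]/eqP-> //; rewrite /commute //.
Qed.

Lemma card2 s : 0 < s -> u ^+ s = 1 -> v ^+ s = 1 -> #|<<[set u; v]>>| <= s * s.
Proof.
move=> s0 us vs.
have sub : <<[set u; v]>> \subset <[u]> * <[v]>.
  rewrite -cent_joinEl ?cents_cycle // gen_subG; apply/subsetP => p.
  rewrite !inE => /orP[]/eqP->; apply: mem_gen; rewrite inE ?cycle_id ?orbT //.
apply: leq_trans (subset_leq_card sub) _.
have := mul_cardG <[u]> <[v]>.
have ou : #|<[u]>| <= s by apply: dvdn_leq => //; rewrite order_dvdn us.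
have ov : #|<[v]>| <= s by apply: dvdn_leq => //; rewrite order_dvdn vs.
move=> E; apply: leq_trans (leq_mul ou ov); rewrite E.
by apply: leq_pmulr; rewrite cardG_gt0.
Qed.
End Abel2.
Section Model.
Variable s : nat.
Hypothesis s2 : (1 < s)%N.
Local Notation Z := 'Z_s.
Local Notation P := (Z * Z)%type.

Definition f0 (p : P) : P := ((1 - p.1 - p.2)%R, p.2).
Definition f1 (p : P) : P := (p.2, p.1).
Definition f2 (p : P) : P := (p.1, (- p.1 - p.2)%R).

Lemma f0K : involutive f0.
Proof. by case=> x y; rewrite /f0 /=; congr pair; ring. Qed.
Lemma f1K : involutive f1. Proof. by case. Qed.
Lemma f2K : involutive f2.
Proof. by case=> x y; rewrite /f2 /=; congr pair; ring. Qed.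

Definition m0 : {perm P} := perm (inv_inj f0K).
Definition m1 : {perm P} := perm (inv_inj f1K).
Definition m2 : {perm P} := perm (inv_inj f2K).

Lemma m_inv2 (f : P -> P) (fK : involutive f) : (perm (inv_inj fK)) ^+ 2 = 1.
Proof. by apply/permP => p; rewrite expgS expg1 permM !permE fK ?perm1. Qed.

Lemma m01 : (m0 * m1) ^+ 3 = 1.
Proof.
apply/permP => -[x y]; rewrite !expgS expg0 mulg1 !permM !permE ?perm1.
by rewrite /f0 /f1 /=; congr pair; ring.
Qed.
Lemma m02 : (m0 * m2) ^+ 3 = 1.
Proof.
apply/permP => -[x y]; rewrite !expgS expg0 mulg1 !permM !permE ?perm1.
by rewrite /f0 /f2 /=; congr pair; ring.
Qed.
Lemma m12 : (m1 * m2) ^+ 3 = 1.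
Proof.
apply/permP => -[x y]; rewrite !expgS expg0 mulg1 !permM !permE ?perm1.
by rewrite /f1 /f2 /=; congr pair; ring.
Qed.

Definition uM := m0 * m1 * m2 * m1.
Definition vM := m1 * m0 * m1 * m2.

Lemma uME p : uM p = ((p.1 - 1)%R, p.2).
Proof. by case: p => x y; rewrite !permM !permE /f0 /f1 /f2 /=; congr pair; ring. Qed.
Lemma vME p : vM p = (p.1, (p.2 - 1)%R).
Proof. by case: p => x y; rewrite !permM !permE /f0 /f1 /f2 /=; congr pair; ring. Qed.

Lemma uMX k p : (uM ^+ k) p = ((p.1 - k%:R)%R, p.2).
Proof.
elim: k => [|k IH]; first by rewrite expg0 ?perm1 subr0; case: p.
by rewrite expgSr permM IH uME /=; congr pair; rewrite mulrSr; ring.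
Qed.
Lemma vMX k p : (vM ^+ k) p = (p.1, (p.2 - k%:R)%R).
Proof.
elim: k => [|k IH]; first by rewrite expg0 ?perm1 subr0; case: p.
by rewrite expgSr permM IH vME /=; congr pair; rewrite mulrSr; ring.
Qed.

Lemma uMs : uM ^+ s = 1.
Proof. by apply/permP => -[x y]; rewrite uMX ?perm1 pchar_Zp // subr0. Qed.

Lemma TM_card : (s * s <= #|<<[set uM; vM]>>|)%N.
Proof.
have -> : (s * s = #|[set: P]|)%N by rewrite cardsT card_prod card_ord Zp_cast.
apply: leq_trans (leq_imset_card (fun t : {perm P} => t (0, 0)%R) _).
apply: subset_leq_card; apply/subsetP => -[x y] _.
apply/imsetP; exists (uM ^+ (s - x) * vM ^+ (s - y)).
  by rewrite groupM // groupX // mem_gen // !inE eqxx ?orbT.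
rewrite permM uMX vMX /= !sub0r !natrB ?pchar_Zp ?sub0r ?opprK ?natr_Zp //.
  by apply: ltnW; rewrite -[X in (_ < X)%N]Zp_cast.
by apply: ltnW; rewrite -[X in (_ < X)%N]Zp_cast.
Qed.
End Model.
Definition o0 : 'I_3 := @Ordinal 3 0 isT.
Definition o1 : 'I_3 := @Ordinal 3 1 isT.
Definition o2 : 'I_3 := @Ordinal 3 2 isT.
Definition t01 : {perm 'I_3} := tperm o0 o1.
Definition t12 : {perm 'I_3} := tperm o1 o2.
Lemma e1 : (t01 * t12) ^+ 3 = 1.
Proof. apply/permP => i; rewrite !expgS expg0 mulg1 !permM !permE.
by case: i => [[|[|[|]]] ?] /=; try apply: val_inj. Qed.
Lemma e2 : t12 * t01 != 1.
Proof. apply/eqP => /permP /(_ o0); rewrite !permM !permE. by []. Qed.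
Lemma e3 : t01 ^+ 2 = 1.
Proof. by rewrite expgS expg1 tperm2. Qed.

Lemma homss (s : nat) (gT : finGroupType) (a b c : gT) :
  coxeter333_rel a b c -> (a * b * c) ^+ (2 * s)%N = 1 ->
  gen3 a b c \homg Grp (x : y : z :
        (x ^+ 2, y ^+ 2, z ^+ 2, (x * y) ^+ 3, (x * z) ^+ 3, (y * z) ^+ 3,
         (x * y * z) ^+ (2 * s)%N)).
Proof.
move=> [[a2 b2 c2] [ab ac bc]] us.
apply/existsP; exists (a, b, c) => /=.
have E : <[a]> <*> <[b]> <*> <[c]> = <<[set a; b; c]>> := esym (congr1 val (gen3E a b c)).
by rewrite !xpair_eqE /= E eqxx a2 b2 c2 ab ac bc us !eqxx.
Qed.

Lemma pairX (gT mT : finGroupType) (x : gT) (y : mT) k :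
  (x, y) ^+ k = (x ^+ k, y ^+ k).
Proof. by elim: k => [|k IH] //; rewrite !expgS IH. Qed.

Lemma cox_pair (gT mT : finGroupType) (a b c : gT) (x y z : mT) :
  coxeter333_rel a b c -> coxeter333_rel x y z ->
  coxeter333_rel (a, x) (b, y) (c, z).
Proof.
move=> [[a2 b2 c2] [ab ac bc]] [[x2 y2 z2] [xy xz yz]].
by split; split; rewrite /= ?pairX ?a2 ?b2 ?c2 ?ab ?ac ?bc ?x2 ?y2 ?z2 ?xy ?xz ?yz.
Qed.

Lemma ss_cox : coxeter333_rel t01 t01 t12.
Proof.
have t1 : t01 * t01 = 1 := etrans (esym (expg2 t01)) e3.
split; split; rewrite ?t1 ?expg1n ?e3 ?e1 //.
by rewrite expgS expg1 tperm2.
Qed.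

Lemma ss_rel s : (t01 * t01 * t12) ^+ (2 * s)%N = 1.
Proof. by rewrite -expg2 e3 mul1g expgM expgS expg1 tperm2 expg1n. Qed.

Theorem mainTheorem5 (s n : nat) (r0 r1 r2 : {perm 'I_n}) :
  2 <= s ->
  [transitive gen3 r0 r1 r2, on [set: 'I_n] | 'P] ->
  (is_G_s0 s r0 r1 r2 /\
     [transitive <<[set tr_u r0 r1 r2; tr_v r0 r1 r2]>>, on [set: 'I_n] | 'P])
  \/
  (is_G_ss s r0 r1 r2 /\
     [transitive <<[set tr_g r0 r1 r2; tr_h r0 r1 r2]>>, on [set: 'I_n] | 'P]) ->
  is_G_s0 s r0 r1 r2 /\ n = (s ^ 2)%N.
Proof.
move=> s2 _ [[hs0 trT] | [hss trT]].
  split=> //; case: hs0 => rel us iso.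
  have [[a2 b2 c2] [ab ac bc]] := rel.
  have cuv : tr_u r0 r1 r2 * tr_v r0 r1 r2 = tr_v r0 r1 r2 * tr_u r0 r1 r2.
    exact: uv_comm.
  have vs : tr_v r0 r1 r2 ^+ s = 1.
    have -> : tr_v r0 r1 r2 = tr_u r0 r1 r2 ^ r1.
      by rewrite /conjg (invol b2) /tr_u /tr_v !mulgA -[_ * r1 * r1]mulgA -expg2 b2 mulg1.
    by rewrite -conjXg us conj1g.
  have s0 : 0 < s by apply: ltnW.
  rewrite (card_reg trT (abel2 cuv)) -mulnn; apply/eqP; rewrite eqn_leq.
  rewrite card2 //=.
  apply: leq_trans (TM_card s2) _.
  have homH : gen3 (r0, m0 s) (r1, m1 s) (r2, m2 s) \homg gen3 r0 r1 r2.
    rewrite iso; apply: homs0.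
      apply: cox_pair => //; split; split; rewrite ?m_inv2 ?m01 ?m02 ?m12 //.
    by rewrite /tr_u /= pairX us uMs.
  have mem3 : forall w, w \in [set (r0, m0 s); (r1, m1 s); (r2, m2 s)] ->
      w \in gen3 (r0, m0 s) (r1, m1 s) (r2, m2 s) by move=> w; apply: mem_gen.
  have := @transfer_card _ _ _ _ _ _ _ _ homH
    (tr_u (r0, m0 s) (r1, m1 s) (r2, m2 s)) (tr_v (r0, m0 s) (r1, m1 s) (r2, m2 s)).
  by apply; rewrite /tr_u /tr_v !groupM // mem3 // !inE eqxx ?orbT.
exfalso; case: hss => rel gs iso.
have [[a2 b2 c2] [ab ac bc]] := rel.
set u := tr_u r0 r1 r2; set v := tr_v r0 r1 r2.
have cuv : u * v = v * u by exact: uv_comm.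
have Tu : u \in <<[set u; v]>> by rewrite mem_gen // !inE eqxx.
have Tv : v \in <<[set u; v]>> by rewrite mem_gen // !inE eqxx ?orbT.
have sT : <<[set tr_g r0 r1 r2; tr_h r0 r1 r2]>> \subset <<[set u; v]>>.
  rewrite gen_subG !subUset !sub1set; apply/andP; split.
    by rewrite /tr_g -(uv_g _ _ b2) groupM.
  have E : tr_h r0 r1 r2 = v * u^-1 * u^-1.
    rewrite /v /tr_v -(huu a2 b2 c2 ac bc) !mulgK.
    by [].
  rewrite E; apply: groupM; first apply: groupM; rewrite ?groupV; [exact: Tv|exact: Tu|exact: Tu].
have uT : u \in <<[set tr_g r0 r1 r2; tr_h r0 r1 r2]>>.
  apply: (abel_in trT); first exact: abelianS sT (abel2 cuv).
  exact: (subsetP (centS sT) u (subsetP (abel2 cuv) u Tu)).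
have homH : gen3 (r0, t01) (r1, t01) (r2, t12) \homg gen3 r0 r1 r2.
  rewrite iso; apply: homss; first by apply: cox_pair => //; exact: ss_cox.
  by rewrite /= pairX gs ss_rel.
have mem3 : forall w, w \in [set (r0, t01); (r1, t01); (r2, t12)] ->
    w \in gen3 (r0, t01) (r1, t01) (r2, t12) by move=> w; apply: mem_gen.
set P0 := (r0, t01); set P1 := (r1, t01); set P2 := (r2, t12).
have h0 : P0 \in gen3 P0 P1 P2 by apply: mem3; rewrite !inE eqxx.
have h1 : P1 \in gen3 P0 P1 P2 by apply: mem3; rewrite !inE eqxx ?orbT.
have h2 : P2 \in gen3 P0 P1 P2 by apply: mem3; rewrite !inE eqxx ?orbT.
have w0 : tr_u P0 P1 P2 \in gen3 P0 P1 P2 by rewrite /tr_u !groupM.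
have w1 : tr_g P0 P1 P2 \in gen3 P0 P1 P2 by rewrite /tr_g groupX // !groupM.
have w2 : tr_h P0 P1 P2 \in gen3 P0 P1 P2 by rewrite /tr_h !groupM.
have key := transfer_mem homH w0 w1 w2 uT.
have g1 : (t01 * t01 * t12) ^+ 2 = 1.
  by rewrite -expg2 e3 mul1g expgS expg1 tperm2.
have : t12 * t01 \in <<[set 1; 1]>>.
  move: key; rewrite /tr_u /tr_g /tr_h /= !tperm2 !mul1g !tperm2 mulg1 tperm2.
  by [].
move=> H1.
have : <<[set (1 : {perm 'I_3}); 1]>> \subset [1 {perm 'I_3}].
  by rewrite gen_subG !subUset sub1set group1.
move=> sub; move: (subsetP sub _ H1) => /set1P /eqP; exact/negP/e2.
Qed.
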